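(* Let $W(\varphi)\setminus \downarrow{\mathfrak Z}=\varnothing$, $\Gamma\setminus \downarrow{\mathfrak Z}\neq\varnothing$ and $\sim=\Gamma\times\Gamma$. Then: 1. $\varnothing \neq P(\varphi)\subseteq \Gamma\setminus \downarrow{\mathfrak Z}\subseteq Q(\varphi)$; 2. for all $\theta\in P(\varphi)$ we have $\{\varphi^n(\theta):n\geq0\}=P(\varphi)$; 3. for $\theta\in P(\varphi)$: \[{\rm Eigen}(\sigma_{\varphi,\mathfrak{w}},V^\Gamma)=\left\{\begin{array}{lc} \{r\in F\setminus\{0\}: \mathfrak{w}_\theta\cdots\mathfrak{w}_{\varphi^{per(\theta)-1}(\theta)}=r^{per(\theta)}\}\:, & \varphi(\Gamma\setminus\mathfrak{Z})=\Gamma\:, \\ \{r\in F\setminus\{0\}: \mathfrak{w}_\theta\cdots\mathfrak{w}_{\varphi^{per(\theta)-1}(\theta)}=r^{per(\theta)}\}\cup\{0\}\:, & \text{otherwise}\:. \end{array}\right.\]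
   Context: $V$ is a vector space over a field $F$, $\Gamma$ a nonempty set, $\varphi:\Gamma\to\Gamma$ a self-map, and $\mathfrak{w}=(\mathfrak{w}_\alpha)_{\alpha\in\Gamma}\in F^\Gamma$. The weighted generalized shift is $\sigma_{\varphi,\mathfrak{w}}:V^\Gamma\to V^\Gamma$, $(x_\alpha)_{\alpha\in\Gamma}\mapsto(\mathfrak{w}_\alpha x_{\varphi(\alpha)})_{\alpha\in\Gamma}$. $\mathfrak{Z}:=\{\alpha\in\Gamma:\mathfrak{w}_\alpha=0\}$ and $\downarrow\mathfrak{Z}:=\bigcup_{n\geq0}\varphi^{-n}(\mathfrak{Z})$. The relation $\sim$ on $\Gamma$ is defined by $\alpha\sim\beta$ iff there exist $n,m\geq1$ with $\varphi^n(\alpha)=\varphi^m(\beta)$. A point $a$ is wandering if $\{\varphi^n(a)\}_{n\geq1}$ is one-to-one, quasi-periodic if $\varphi^n(a)=\varphi^m(a)$ for some $n>m\geq1$, periodic if $\varphi^n(a)=a$ for some $n\geq1$; $W(\varphi),Q(\varphi),P(\varphi)$ denote the sets of wandering, quasi-periodic, periodic points, and for $\alpha\in P(\varphi)$, $per(\alpha)=\min\{n\geq1:\varphi^n(\alpha)=\alpha\}$. For a linear map $T:W\to W$, ${\rm Eigen}(T,W)$ is the set of all $r\in F$ such that $T(x)=rx$ for some nonzero $x\in W$. *)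

(* Defs.v *)
From HB Require Import structures.
From mathcomp Require Import all_boot all_order all_algebra.
Set Implicit Arguments. Unset Strict Implicit. Unset Printing Implicit Defensive.
Import GRing.Theory.
Local Open Scope ring_scope.

Section WGS.
Variables (F : fieldType) (V : lmodType F) (Gamma : Type).
Variables (phi : Gamma -> Gamma) (w : Gamma -> F).

Definition wshift (x : Gamma -> V) : Gamma -> V := fun a => w a *: x (phi a).

Definition Zset (a : Gamma) : Prop := w a = 0.
Definition downZ (a : Gamma) : Prop := exists n : nat, Zset (iter n phi a).

Definition simrel (a b : Gamma) : Prop :=
  exists n m : nat, (1 <= n)%N /\ (1 <= m)%N /\ iter n phi a = iter m phi b.

Definition wandering (a : Gamma) : Prop :=
  forall n m : nat, (1 <= n)%N -> (1 <= m)%N -> iter n phi a = iter m phi a -> n = m.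
Definition quasi_periodic (a : Gamma) : Prop :=
  exists n m : nat, (m < n)%N /\ (1 <= m)%N /\ iter n phi a = iter m phi a.
Definition periodic (a : Gamma) : Prop :=
  exists n : nat, (1 <= n)%N /\ iter n phi a = a.

Definition is_per (a : Gamma) (p : nat) : Prop :=
  [/\ (1 <= p)%N, iter p phi a = a &
      forall k : nat, (1 <= k)%N -> iter k phi a = a -> (p <= k)%N].

Definition Eigen (r : F) : Prop :=
  exists x : Gamma -> V, x <> (fun _ => 0) /\ wshift x = (fun a => r *: x a).

Definition image_nonZ_full : Prop :=
  forall b : Gamma, exists a : Gamma, ~ Zset a /\ phi a = b.

End WGS.

(* Main.v *)
Require Import Defs.
From HB Require Import structures.
From mathcomp Require Import all_boot all_order all_algebra.
From Stdlib Require Import Classical ClassicalEpsilon FunctionalExtensionality.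
Import GRing.Theory.
Local Open Scope ring_scope.

Section H.
Variables (T : Type) (f : T -> T).

Lemma iter_comm n m x : iter n f (iter m f x) = iter m f (iter n f x).
Proof. by rewrite -!iterD addnC. Qed.

Lemma iter_mul n x : iter n f x = x -> forall k, iter (k * n) f x = x.
Proof.
move=> H; elim=> [|k IH] //=.
by rewrite mulSn iterD IH H.
Qed.

Lemma iter_back q x : iter q.+1 f x = x -> forall n, iter (n * q) f (iter n f x) = x.
Proof.
move=> H n; rewrite -iterD -{2}(iter_mul _ _ H n).
by rewrite mulnS addnC.
Qed.

Lemma per_dvd p x : (1 <= p)%N -> iter p f x = x ->
  (forall k, (1 <= k)%N -> iter k f x = x -> (p <= k)%N) ->
  forall d, iter d f x = x -> exists k, d = (k * p)%N.
Proof.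
move=> p1 Hp Hmin d Hd.
exists (d %/ p)%N.
have E : iter (d %% p) f x = x.
  by rewrite -{2}Hd {2}(divn_eq d p) addnC iterD (iter_mul _ _ Hp).
case: (posnP (d %% p)) => [h|h].
  by rewrite {1}(divn_eq d p) h addn0.
have := Hmin _ h E; rewrite leqNgt ltn_pmod //.
Qed.
End H.

Section E.
Variables (F : fieldType) (V : lmodType F) (Gamma : Type).
Variables (phi : Gamma -> Gamma) (w : Gamma -> F).
Variables (th : Gamma) (p : nat).
Hypothesis p1 : (1 <= p)%N.
Hypothesis Hp : iter p phi th = th.
Hypothesis Hmin : forall k, (1 <= k)%N -> iter k phi th = th -> (p <= k)%N.
Hypothesis reach : forall a, exists n, iter n phi a = th.

Let c := \prod_(i < p) w (iter i phi th).

Lemma eig_prod (x : Gamma -> V) r (H : wshift phi w x = (fun a => r *: x a)) n :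
  forall a, (\prod_(i < n) w (iter i phi a)) *: x (iter n phi a) = r ^+ n *: x a.
Proof.
elim: n => [|n IH] a; first by rewrite big_ord0 !scale1r.
rewrite big_ord_recl /= -scalerA.
have -> : \prod_(i < n) w (iter (bump 0 i) phi a) = \prod_(i < n) w (iter i phi (phi a)).
  by apply: eq_bigr => i _; rewrite /bump /= add0n -iterS iterSr.
rewrite -iterS iterSr IH scalerA mulrC -scalerA.
have := congr1 (fun g => g a) H; rewrite /wshift /= => ->.
by rewrite scalerA -exprSr.
Qed.

Lemma prod_split n k a : \prod_(i < n + k) w (iter i phi a) =
  \prod_(i < n) w (iter i phi a) * \prod_(i < k) w (iter i phi (iter n phi a)).
Proof.
rewrite big_split_ord /=; congr (_ * _).
by apply: eq_bigr => i _; rewrite /= iterD iter_comm.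
Qed.

Lemma prod_cycle k : \prod_(i < k * p) w (iter i phi th) = c ^+ k.
Proof.
elim: k => [|k IH]; first by rewrite mul0n big_ord0 expr0.
by rewrite mulSn prod_split Hp IH exprS.
Qed.

Lemma nonzero_fun (x : Gamma -> V) : x <> (fun _ => 0) -> exists b, x b != 0.
Proof.
move=> Hx; apply: NNPP => Hn; apply: Hx.
apply: functional_extensionality => b; apply/eqP.
by apply: contra_notT (fun h => Hn (ex_intro _ b h)).
Qed.

Lemma eig_nz r : (exists v : V, v != 0) -> r != 0 -> Eigen V phi w r <-> c = r ^+ p.
Proof.
move=> [v vne] rne; split.
  move=> [x [xne H]].
  have [b xb] := nonzero_fun _ xne.
  have [n hn] := reach b.
  have := eig_prod _ _ H n b; rewrite hn => E1.
  have xth : x th != 0.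
    apply: contraTneq xb => h0; move: E1; rewrite h0 scaler0 => /esym/eqP.
    by rewrite scaler_eq0 expf_eq0 (negbTE rne) andbF /= => ->.
  have := eig_prod _ _ H p th; rewrite Hp -/c => /eqP.
  rewrite -subr_eq0 -scalerBl scaler_eq0 (negbTE xth) orbF subr_eq0.
  by move/eqP.
move=> Hc.
pose N a := proj1_sig (constructive_indefinite_description _ (reach a)).
have HN a : iter (N a) phi a = th by rewrite /N; case: constructive_indefinite_description.
pose f a n := r^-1 ^+ n * \prod_(i < n) w (iter i phi a).
have indep a n m : iter n phi a = th -> iter m phi a = th -> f a n = f a m.
  wlog le : n m / (n <= m)%N.
    move=> W h1 h2; case: (leqP n m) => h; first exact: W.
    by symmetry; apply: W => //; apply: ltnW.
  move=> h1 h2.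
  have Em : m = (n + (m - n))%N by rewrite subnKC.
  have : iter (m - n) phi th = th by rewrite -{1}h1 -iterD addnC -Em.
  move/(per_dvd _ _ _ _ p1 Hp Hmin) => [k hk].
  rewrite /f Em prod_split h1 hk prod_cycle Hc exprD mulrACA.
  suff -> : r^-1 ^+ (k * p) * r ^+ p ^+ k = 1 by rewrite mulr1.
  by rewrite mulnC exprM -exprMn exprVn mulVf ?expf_neq0 // expr1n.
exists (fun a => f a (N a) *: v); split.
  move/(congr1 (fun g => g th)) => /eqP.
  rewrite -(indep th 0 (N th)) //= /f expr0 big_ord0 mulr1 scale1r.
  by rewrite (negbTE vne).
apply: functional_extensionality => a; rewrite /wshift /= scalerA.
have h1 : iter (N (phi a)).+1 phi a = th by rewrite iterSr.
rewrite (indep a (N a) _ (HN a) h1) scalerA; congr (_ *: _).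
rewrite /f big_ord_recl exprS /=.
have -> : \prod_(i < N (phi a)) w (iter (bump 0 i) phi a) = \prod_(i < N (phi a)) w (iter i phi (phi a)).
  by apply: eq_bigr => i _; rewrite /bump /= add0n -iterS iterSr.
by rewrite !mulrA mulfV // mul1r [w a * _]mulrC.
Qed.

Lemma eig_0 : (exists v : V, v != 0) -> Eigen V phi w 0 <-> ~ image_nonZ_full phi w.
Proof.
move=> [v vne]; split.
  move=> [x [xne H]] Hf.
  have [b xb] := nonzero_fun _ xne.
  have [a [za hb]] := Hf b.
  have := congr1 (fun g => g a) H; rewrite /wshift /= scale0r hb => /eqP.
  by rewrite scaler_eq0 (negbTE xb) orbF; apply/negP; apply/eqP.
move=> Hf.
have [b Hb] : exists b, forall a, phi a = b -> w a = 0.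
  apply: NNPP => Hn; apply: Hf => b; apply: NNPP => Hb; apply: Hn; exists b => a ha.
  by apply: NNPP => wa; apply: Hb; exists a.
exists (fun a => if excluded_middle_informative (a = b) then v else 0); split.
  move/(congr1 (fun g => g b)); case: excluded_middle_informative => // _ /eqP.
  by rewrite (negbTE vne).
apply: functional_extensionality => a; rewrite /wshift scale0r.
case: excluded_middle_informative => [h|h]; first by rewrite Hb // scale0r.
by rewrite scaler0.
Qed.
End E.

Theorem lemma2p7 (F : fieldType) (V : lmodType F) (Gamma : Type)
  (phi : Gamma -> Gamma) (w : Gamma -> F)
  (HV : exists v : V, v != 0)
  (Hwand : forall a, wandering phi a -> downZ phi w a)
  (Hne : exists a, ~ downZ phi w a)
  (Hsim : forall a b, simrel phi a b) :
  [/\ (* 1 *)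
      (exists t, periodic phi t)
      /\ (forall a, periodic phi a -> ~ downZ phi w a)
      /\ (forall a, ~ downZ phi w a -> quasi_periodic phi a),
      (* 2 *)
      (forall t, periodic phi t ->
         forall a, (exists n : nat, iter n phi t = a) <-> periodic phi a) &
      (* 3 *)
      (forall t p, periodic phi t -> is_per phi t p ->
         (image_nonZ_full phi w ->
            forall r : F, Eigen V phi w r <->
              (r != 0 /\ \prod_(i < p) w (iter i phi t) = r ^+ p))
         /\
         (~ image_nonZ_full phi w ->
            forall r : F, Eigen V phi w r <->
              ((r != 0 /\ \prod_(i < p) w (iter i phi t) = r ^+ p) \/ r = 0)))].
Proof.
have QP : forall a, ~ downZ phi w a -> quasi_periodic phi a.
  move=> a Ha; apply: NNPP => Hq; apply: Ha; apply: Hwand => n m n1 m1 E.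
  apply: NNPP => nm; apply: Hq.
  case: (ltngtP n m) => h; last by [].
    by exists m, n; split.
  by exists n, m; split.
have [a0 Ha0] := Hne.
split.
- split.
    have [n [m [lt [m1 E]]]] := QP _ Ha0.
    exists (iter m phi a0), (n - m)%N; split; first by rewrite subn_gt0.
    by rewrite -iterD subnK ?E // ltnW.
  split => //.
  move=> a [[|q] [q1 Eq]] //.
  move=> [k Zk]; apply: Ha0.
  have [n [m [n1 [m1 E]]]] := Hsim a a0.
  have := iter_back _ _ _ _ Eq n; rewrite E -iterD => Ea.
  by exists (k + (n * q + m))%N; rewrite iterD Ea.
- move=> t [[|q] [q1 Eq]] // a; split.
    move=> [n <-]; exists q.+1; split => //.
    by rewrite iter_comm Eq.
  move=> [[|q'] [q1' Eq']] //.
  have [n [m [n1 [m1 E]]]] := Hsim t a.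
  have := iter_back _ _ _ _ Eq' m; rewrite -E -iterD => Ea.
  by exists (m * q' + n)%N.
- move=> t p _ [p1 Hp Hmin].
  have reach : forall a, exists n, iter n phi a = t.
    case: p p1 Hp Hmin => [|q] // _ Hp _ a.
    have [n [m [n1 [m1 E]]]] := Hsim a t.
    have := iter_back _ _ _ _ Hp m; rewrite -E -iterD => Ea.
    by exists (m * q + n)%N.
  split.
    move=> Hf r.
    case: (eqVneq r 0) => [->|rne].
      rewrite (eig_0 _ _ _ _ _ HV); split => [/(_ Hf) []|[]] //; by rewrite eqxx.
    rewrite (eig_nz _ _ _ _ _ _ _ p1 Hp Hmin reach _ HV rne); split => [->|[]] //.
  move=> Hf r.
  case: (eqVneq r 0) => [->|rne].
    rewrite (eig_0 _ _ _ _ _ HV); split => // _; by right.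
  rewrite (eig_nz _ _ _ _ _ _ _ p1 Hp Hmin reach _ HV rne); split => [->|[[]|]] //.
    by left.
  by move=> h; rewrite h eqxx in rne.
Qed.
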